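(* Let $G$ be a finite set with $n=\#G\ge 1$ elements and let $s:G\to G$ be a translation on $G$. Then there exists a quasigroup operation $*$ on $G$ for which $s$ is an automorphism (i.e. $s(x*y)=s(x)*s(y)$ for all $x,y\in G$) if and only if $n$ is odd.
   Context: A binary operation $*$ on a set $G$ is a quasigroup operation if it is left and right cancelable: $x*y=x*z\Rightarrow y=z$ and $y*x=z*x\Rightarrow y=z$ for all $x,y,z\in G$. For a finite set $G$, a map $s:G\to G$ is called a translation on $G$ if for every $x\in G$ one has $G=\{s^k(x): k=0,1,\ldots,\#G-1\}$ (equivalently, $s$ is a cyclic permutation of $G$ of length $\#G$). *)

(* Defs.v *)
From mathcomp Require Import all_boot.
Set Implicit Arguments. Unset Strict Implicit. Unset Printing Implicit Defensive.

Definition quasigroup_op (G : Type) (op : G -> G -> G) : Prop :=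
  (forall x y z, op x y = op x z -> y = z) /\
  (forall x y z, op y x = op z x -> y = z).

Definition translation (G : finType) (s : G -> G) : Prop :=
  forall x y : G, exists k : nat, k < #|G| /\ y = iter k s x.

Definition is_aut_of (G : Type) (op : G -> G -> G) (s : G -> G) : Prop :=
  forall x y, s (op x y) = op (s x) (s y).

(* Main.v *)
Require Import Defs.
From mathcomp Require Import all_boot.
From mathcomp Require Import zify.
Set Implicit Arguments. Unset Strict Implicit.

Lemma tr_inj (G : finType) (s : G -> G) : translation s -> injective s.
Proof.
move=> tr.
have ex : forall y, exists x, s x == y.
  move=> y; have [k [_ Hk]] := tr (s y) y.
  by exists (iter k s y); rewrite -iterS iterSr -Hk.
pose s' y := xchoose (ex y).
have c : cancel s' s by move=> y; apply/eqP; exact: (xchooseP (ex y)).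
have bs' : bijective s' by apply: injF_bij; exact: can_inj c.
by apply: (can_inj (g := s')); apply/(bij_can_sym bs').
Qed.

Lemma tr_order (G : finType) (s : G -> G) x0 : translation s -> order s x0 = #|G|.
Proof.
move=> tr; rewrite /order.
have H : fconnect s x0 =i predT.
  move=> y; rewrite !inE; have [k [_ ->]] := tr x0 y; exact: fconnect_iter.
by rewrite (eq_card H).
Qed.

Lemma tr_fcon (G : finType) (s : G -> G) x0 y : translation s -> fconnect s x0 y.
Proof. move=> tr; have [k [_ ->]] := tr x0 y; exact: fconnect_iter. Qed.

Lemma e_mod (G : finType) (s : G -> G) x0 k : translation s ->
  iter (k %% #|G|) s x0 = iter k s x0.
Proof.
move=> tr; have io := iter_order (tr_inj tr) x0; rewrite tr_order // in io.
rewrite {2}(divn_eq k #|G|) addnC iterD; congr (iter _ s _).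
elim: (k %/ #|G|) => [|q IH]; first by rewrite mul0n.
  by rewrite mulSn iterD -IH io.
Qed.

Lemma e_inj (G : finType) (s : G -> G) x0 a b : translation s ->
  iter a s x0 = iter b s x0 -> a %% #|G| = b %% #|G|.
Proof.
move=> tr; rewrite -(e_mod x0 a tr) -(e_mod x0 b tr) => H.
have n0 : 0 < #|G| by apply/card_gt0P; exists x0.
have := @findex_iter _ s x0 (a %% #|G|); rewrite tr_order // ltn_pmod // => /(_ isT).
have := @findex_iter _ s x0 (b %% #|G|); rewrite tr_order // ltn_pmod // => /(_ isT).
by rewrite H => -> ->.
Qed.

Lemma e_eqmod (G : finType) (s : G -> G) x0 a b : translation s ->
  a %% #|G| = b %% #|G| -> iter a s x0 = iter b s x0.
Proof. by move=> tr H; rewrite -(e_mod x0 a tr) H e_mod. Qed.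

Lemma halfcancel n h a b : h * 2 = n.+1 -> (h * a) %% n = (h * b) %% n -> a %% n = b %% n.
Proof.
move=> H2 H.
have : (2 * (h * a)) %% n = (2 * (h * b)) %% n by rewrite -modnMmr H modnMmr.
by rewrite !mulnA (mulnC 2) H2 !mulSn !(addnC _ (n * _)) !(mulnC n) !modnMDl.
Qed.

Theorem lemma2p1 (G : finType) (s : G -> G) :
  0 < #|G| -> translation s ->
  (exists op : G -> G -> G, quasigroup_op op /\ is_aut_of op s) <-> odd #|G|.
Proof.
move=> n0 tr.
have [x0 _] : exists x0 : G, true by move/card_gt0P: n0 => [x _]; exists x.
set n := #|G| in n0 *.
pose e k := iter k s x0.
have ord : order s x0 = n by exact: tr_order.
split.
- move=> [op [[ql qr] aut]]; apply: contraT => ev.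
  pose f t := findex s x0 (op x0 (e t)).
  have hf t : op x0 (e t) = e (f t) by rewrite /e iter_findex //; exact: tr_fcon.
  have hfn t : f t < n by rewrite -ord; apply: findex_max; exact: tr_fcon.
  have hA a t : op (e a) (e (a + t)) = e (a + f t).
    elim: a => [|a IH]; first by rewrite !add0n hf.
    by rewrite !addSn /e !iterS -aut IH.
  pose g t := (f t + n - t) %% n.
  have hg t : t < n -> op (e (n - t)) x0 = e (g t).
    move=> lt; have := hA (n - t) t; rewrite subnK; last exact: ltnW.
    have -> : e n = x0 by rewrite /e -ord iter_order //; exact: tr_inj.
    move=> ->; rewrite /g /e e_mod //; congr iter; lia.
  pose F (t : 'I_n) := Ordinal (hfn t).
  pose Gf (t : 'I_n) := Ordinal (ltn_pmod (f t + n - t) n0).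
  have Finj : injective F.
    move=> t1 t2 /(congr1 val) /= H; apply: val_inj => /=.
    have : op x0 (e t1) = op x0 (e t2) by rewrite !hf H.
    move/ql/e_inj => /(_ tr); rewrite !modn_small //.
  have Ginj : injective Gf.
    move=> t1 t2 /(congr1 val) /= H; apply: val_inj => /=.
    have : op (e (n - t1)) x0 = op (e (n - t2)) x0 by rewrite !hg // /g H.
    move/qr/e_inj => /(_ tr) H1.
    have : ((n - t1) %% n + (t1 + t2)) %% n = ((n - t2) %% n + (t1 + t2)) %% n by rewrite H1.
    rewrite !modnDml.
    have l1 := ltn_ord t1; have l2 := ltn_ord t2.
    have -> : n - t1 + (t1 + t2) = t2 + n by lia.
    have -> : n - t2 + (t1 + t2) = t1 + n by lia.
    by rewrite !modnDr !modn_small.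
  pose S := \sum_(t < n) (t : nat).
  have SF : S = \sum_(t < n) (F t : nat) by rewrite /S (reindex_inj Finj).
  have SG : S = \sum_(t < n) (Gf t : nat) by rewrite /S (reindex_inj Ginj).
  have E : (\sum_(t < n) ((Gf t : nat) + t)) %% n = (\sum_(t < n) (F t : nat)) %% n.
    rewrite -[LHS]modn_summ -[RHS]modn_summ; congr (_ %% n); apply: eq_bigr => t _ /=.
    rewrite modnDml.
    have -> : f t + n - t + t = f t + n by have := ltn_ord t; lia.
    by rewrite modnDr modn_small.
  rewrite big_split /= -SF -SG in E.
  have : (S + S == S + 0 %[mod n]) by rewrite addn0 E.
  rewrite eqn_modDl mod0n /S -(big_mkord xpredT (fun i => i)) bin2_sum bin2 => /eqP.
  have hn := odd_double_half n; rewrite (negbTE ev) add0n in hn.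
  set m := n./2 in hn.
  have m0 : 0 < m by lia.
  rewrite -hn => /eqP; rewrite -/(dvdn _ _).
  have -> : m.*2 * (m.*2).-1 = (m * (m.*2).-1).*2 by lia.
  rewrite doubleK -mul2n mulnC dvdn_pmul2l // dvdn2.
  have : odd (m.*2).-1 by case: m m0 hn => // m' _ _; rewrite doubleS /= odd_double.
  by rewrite muln2 => ->.
- move=> odn.
  pose h := n.+1./2.
  have h2 : h * 2 = n.+1.
    have := odd_double_half n.+1; rewrite /= odn /= add0n.
    by rewrite -muln2.
  pose idx x := findex s x0 x.
  have ei x : e (idx x) = x by rewrite /e iter_findex //; exact: tr_fcon.
  have il x : idx x < n by rewrite -ord; apply: findex_max; exact: tr_fcon.
  have iS x : idx (s x) = (idx x).+1 %% n.
    rewrite -(modn_small (il (s x))); apply: (@e_inj G s x0 _ _ tr).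
    by rewrite /e -/(e _) ei iterS -/(e _) ei.
  exists (fun x y => e (h * (idx x + idx y))); split; first split.
  + move=> x y z /(@e_inj G s x0 _ _ tr) /(halfcancel h2) /eqP.
    rewrite eqn_modDl !modn_small // => /eqP H.
    by rewrite -(ei y) -(ei z) H.
  + move=> x y z /(@e_inj G s x0 _ _ tr) /(halfcancel h2) /eqP.
    rewrite !(addnC _ (idx x)) eqn_modDl !modn_small // => /eqP H.
    by rewrite -(ei y) -(ei z) H.
  + move=> x y; rewrite /e -iterS; apply: e_eqmod => //.
    rewrite !iS -modnMmr modnDm modnMmr.
    have -> : h * ((idx x).+1 + (idx y).+1) = h * (idx x + idx y) + 1 + n.
      rewrite -addSnnS addnS mulnDr -addn1 mulnDr.
      have : h * 2 = n.+1 := h2. lia.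
    by rewrite modnDr addn1.
Qed.
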